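(* If $G$ is a nice connected graph of order $n$ and size $m$, then ${\rm ML}^{\rm W}(G) \leq 2(m+n-1)$; in particular ${\rm ML}^{\rm W}(G)\leq 4m$.
   Context: All graphs are finite and simple. A walk of a graph $G$ is a sequence of vertices $u_0u_1\dots u_p$ with $u_tu_{t+1}\in E(G)$ for all $t$ (vertices and edges may repeat); its length is $p$. For a walk $W$ of $G$, $G+W$ is the multigraph on $V(G)$ whose edge multiset consists of $E(G)$ together with each edge added as many times as $W$ traverses it. A multigraph is locally irregular if no two adjacent vertices have the same degree; a walk $W$ is irregularising if $G+W$ is locally irregular. A graph is nice if it is connected and not isomorphic to $K_2$. ${\rm ML}^{\rm W}(G)$ denotes the minimum length of an irregularising walk of $G$ (a walk of length $0$ is allowed). *)

(* Defs.v *)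
From mathcomp Require Import all_boot.
Set Implicit Arguments. Unset Strict Implicit. Unset Printing Implicit Defensive.

Definition simple_graph (T : finType) (e : rel T) : Prop :=
  symmetric e /\ irreflexive e.

(* order n = #|T|; size m = number of edges (2-element vertex sets {x,y} with x~y) *)
Definition edge_set (T : finType) (e : rel T) : {set {set T}} :=
  [set E : {set T} | [exists x, exists y, e x y && (E == [set x; y])]].
Definition gsize (T : finType) (e : rel T) : nat := #|edge_set e|.

Definition connected_graph (T : finType) (e : rel T) : Prop :=
  0 < #|T| /\ forall x y : T, connect e x y.

Definition iso_K2 (T : finType) (e : rel T) : Prop :=
  exists f : T -> bool, bijective f /\ forall x y, e x y = (f x != f y).

Definition nice (T : finType) (e : rel T) : Prop :=
  connected_graph e /\ ~ iso_K2 e.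

(* A walk u0 u1 ... up is given by its start u0 and the list [u1;...;up];
   its length is p = size s. *)
Definition is_walk (T : finType) (e : rel T) (u0 : T) (s : seq T) : bool :=
  path e u0 s.

Definition trav (T : finType) (u0 : T) (s : seq T) (x y : T) : nat :=
  count (fun p : T * T => ((p.1 == x) && (p.2 == y)) || ((p.1 == y) && (p.2 == x)))
        (zip (u0 :: s) s).

(* degree of v in the multigraph G + W (each edge xy of G has multiplicity
   1 + trav x y; W only uses edges of G) *)
Definition deg_plus (T : finType) (e : rel T) (u0 : T) (s : seq T) (v : T) : nat :=
  \sum_(y : T | e v y) (1 + trav u0 s v y).

(* G + W is locally irregular: adjacent vertices have distinct degrees
   (adjacency in G+W coincides with adjacency in G). *)
Definition irregularising (T : finType) (e : rel T) (u0 : T) (s : seq T) : Prop :=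
  forall x y : T, e x y -> deg_plus e u0 s x != deg_plus e u0 s y.

Definition MLW_le (T : finType) (e : rel T) (k : nat) : Prop :=
  exists (u0 : T) (s : seq T), is_walk e u0 s /\ irregularising e u0 s /\ size s <= k.

(* Main.v *)
Require Import Defs.
From mathcomp Require Import all_boot zify.
Set Implicit Arguments. Unset Strict Implicit. Unset Printing Implicit Defensive.

Section Walks.
Variable T : finType.
Variable e : rel T.
Hypothesis esym : symmetric e.
Hypothesis eirr : irreflexive e.

Definition pairs (l : seq T) := zip l (behead l).
Definition cnt (L : seq (T * T)) (x y : T) : nat :=
  count (fun p : T * T => ((p.1 == x) && (p.2 == y)) || ((p.1 == y) && (p.2 == x))) L.
Definition degc (L : seq (T * T)) (v : T) : nat := \sum_(y | e v y) cnt L v y.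
Definition dg (v : T) : nat := \sum_(y | e v y) 1.

Lemma cnt_cat L1 L2 x y : cnt (L1 ++ L2) x y = cnt L1 x y + cnt L2 x y.
Proof. by rewrite /cnt count_cat. Qed.

Lemma degc_cat L1 L2 v : degc (L1 ++ L2) v = degc L1 v + degc L2 v.
Proof. by rewrite /degc -big_split; apply: eq_bigr => y _; rewrite cnt_cat. Qed.

Lemma cnt_nseq j q x y : cnt (nseq j q) x y = j * cnt [:: q] x y.
Proof. by rewrite /cnt count_nseq /= addn0 mulnC. Qed.

Lemma degc_nseq j q v : degc (nseq j q) v = j * degc [:: q] v.
Proof. by rewrite /degc big_distrr; apply: eq_bigr => y _; rewrite cnt_nseq. Qed.

Lemma cnt_swap u w x y : cnt [:: (w, u)] x y = cnt [:: (u, w)] x y.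
Proof.
rewrite /cnt /=; case: (w == x); case: (u == y); case: (w == y); case: (u == x) => //.
Qed.

Lemma sum_eq1 v w : \sum_(y | e v y) (y == w) = e v w.
Proof.
case evw: (e v w).
  rewrite (bigD1 w) ?evw // eqxx big1 // => y /andP [_ /negbTE ->] //.
rewrite big1 // => y eyv; apply/eqP; rewrite eqb0; apply: contraFN evw => /eqP <-.
by [].
Qed.

Lemma cnt1 u w v y : u != w ->
  cnt [:: (u, w)] v y = (v == u) * (y == w) + (v == w) * (y == u).
Proof.
move=> nuw; rewrite /cnt /= addn0 (eq_sym u v) (eq_sym w y) (eq_sym u y) (eq_sym w v).
have [->|nvu] := eqVneq v u.
  by rewrite eq_sym (negbTE nuw) /= andbF orbF mul1n mul0n addn0.
by rewrite /=; case: (v == w); case: (y == u).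
Qed.

Lemma degc1 u w v : e u w -> degc [:: (u, w)] v = (v == u) + (v == w).
Proof.
move=> euw; have nuw : u != w by apply: contraTneq euw => ->; rewrite eirr.
rewrite /degc (eq_bigr _ (fun y _ => cnt1 v y nuw)) big_split /= -!big_distrr /=.
rewrite !sum_eq1.
have [->|nvu] := eqVneq v u; first by rewrite euw (negbTE nuw) muln1.
have [->|nvw] := eqVneq v w; first by rewrite esym euw.
by [].
Qed.

Lemma pairs_cat p1 u p2 : pairs (p1 ++ u :: p2) = pairs (rcons p1 u) ++ pairs (u :: p2).
Proof.
elim: p1 => [|a p1 IH] //=.
case: p1 IH => [|b p1] IH //=.
by rewrite /pairs /= in IH *; rewrite IH.
Qed.

Lemma pairs_rcons x s z : pairs (rcons (x :: s) z) = rcons (pairs (x :: s)) (last x s, z).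
Proof.
elim: s x => [|y s IH] x //=.
by rewrite /pairs /= in IH *; rewrite IH.
Qed.

Lemma sorted_pairs l : sorted e l = all (fun q => e q.1 q.2) (pairs l).
Proof.
elim: l => [|a l IH] //=; case: l IH => [|b l] IH //=.
by rewrite /pairs /= in IH *; rewrite IH.
Qed.

Lemma split_ex (l : seq T) x : x \in l -> exists p1 p2, l = p1 ++ x :: p2.
Proof. by case/splitPr => p1 p2; exists p1, p2. Qed.

Lemma cnt_uw u w x y : cnt [:: (u, w); (w, u)] x y = 2 * cnt [:: (u, w)] x y.
Proof.
by rewrite -cat1s cnt_cat cnt_swap addnn -mul2n.
Qed.

Lemma splice r s u w : path e r s -> last r s = r -> u \in r :: s -> e u w ->
  exists s', [/\ path e r s', last r s' = r, size s' = (size s).+2,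
   (forall x y, cnt (pairs (r :: s')) x y = cnt (pairs (r :: s)) x y + 2 * cnt [:: (u, w)] x y) &
   {subset w :: r :: s <= r :: s'} ].
Proof.
move=> ps ls Hu euw.
have [p1 [p2 E]] := split_ex Hu.
have [s' E'] : exists s', r :: s' = p1 ++ u :: w :: u :: p2.
  by case: p1 E => [|a p1] /= [-> _]; [exists (w :: u :: p2) | exists (p1 ++ u :: w :: u :: p2)].
have Ep : forall x y, cnt (pairs (r :: s')) x y = cnt (pairs (r :: s)) x y + 2 * cnt [:: (u, w)] x y.
  move=> x y; rewrite E' E !pairs_cat !cnt_cat -cnt_uw.
  have -> : pairs [:: u, w, u & p2] = [:: (u, w); (w, u)] ++ pairs (u :: p2) by [].
  by rewrite cnt_cat addnA addnAC.
exists s'; split => //.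
- have : sorted e (r :: s') by rewrite E' sorted_pairs pairs_cat all_cat /=
     euw esym euw /= -all_cat -pairs_cat -E -sorted_pairs.
  by [].
- have := congr1 (last r) E'; rewrite /= => ->.
  by rewrite last_cat /= -[in RHS]ls -[last r s]/(last r (r :: s)) E last_cat.
- have H1 := congr1 size E'; have H2 := congr1 size E.
  rewrite /= !size_cat /= in H1 H2; lia.
- move=> x; rewrite [r :: s]E E' !(inE, mem_cat).
  by case/orP => [->|/orP[->|/orP[->|->]]]; rewrite ?orbT.
Qed.

Lemma realize r s (L : seq (T * T)) :
  path e r s -> last r s = r -> all (fun q => e q.1 q.2) L ->
  (forall q, q \in L -> q.1 \in r :: s) ->
  exists s1, [/\ path e r s1, last r s1 = r, size s1 = size s + 2 * size L,
   (forall x y, cnt (pairs (r :: s1)) x y = cnt (pairs (r :: s)) x y + 2 * cnt L x y) &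
   {subset r :: s <= r :: s1} ].
Proof.
move=> ps ls; elim: L => [|q L IH] /=.
  by move=> _ _; exists s; split => //; [lia | move=> x y; rewrite /cnt /=; lia].
move=> /andP [eq aL] HL.
have [s1 [p1 l1 z1 c1 sub1]] := IH aL (fun q' h => HL q' (mem_behead (s := q :: L) h)).
have Hq : q.1 \in r :: s1 by apply: sub1; apply: HL; rewrite inE eqxx.
have [s2 [p2 l2 z2 c2 sub2]] := splice p1 l1 Hq eq.
exists s2; split => //.
- by rewrite z2 z1; lia.
- move=> x y; rewrite c2 c1.
  by rewrite /cnt /=; lia.
- by move=> x hx; apply: sub2; rewrite inE sub1 ?orbT.
Qed.

Fixpoint okb (pre l : seq T) : bool :=
  if l is v :: l' then ((pre == [::]) || has (e v) pre) && okb (rcons pre v) l' else true.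

Lemma okb_cat pre l1 l2 : okb pre (l1 ++ l2) = okb pre l1 && okb (pre ++ l1) l2.
Proof.
elim: l1 pre => [|v l1 IH] pre /=; first by rewrite cats0.
by rewrite IH cat_rcons andbA.
Qed.

Lemma okb_rcons pre l w :
  okb pre (rcons l w) = okb pre l && ((pre ++ l == [::]) || has (e w) (pre ++ l)).
Proof. by rewrite -cats1 okb_cat /= andbT. Qed.

Lemma spanning r l : okb [::] (r :: l) ->
  exists s LT, [/\ path e r s, last r s = r, size s = 2 * size l,
    {subset r :: l <= r :: s} & forall x y, cnt (pairs (r :: s)) x y = 2 * cnt LT x y].
Proof.
elim/last_ind: l => [|l w IH].
  by move=> _; exists [::], [::]; split => // x y; rewrite /cnt.
rewrite -rcons_cons okb_rcons cat0s => /andP [ok1 /orP [//|/hasP [u hu ewu]]].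
have [s [LT [ps ls sz sub c]]] := IH ok1.
have euw : e u w by rewrite esym.
have [s' [ps' ls' sz' c' sub']] := splice ps ls (sub _ hu) euw.
exists s', ((u, w) :: LT); split => //.
- by rewrite sz' sz size_rcons; lia.
- move=> x; rewrite mem_rcons inE => /orP [/eqP ->|hx].
    by apply: sub'; rewrite inE eqxx.
  by apply: sub'; rewrite inE sub ?orbT.
- move=> x y; rewrite c' c.
  have -> : cnt ((u, w) :: LT) x y = cnt [:: (u, w)] x y + cnt LT x y by rewrite -cnt_cat.
  lia.
Qed.

Lemma leave (S : seq T) a x : connect e a x -> a \in S -> x \notin S ->
  exists u w, [/\ u \in S, w \notin S & e u w].
Proof.
case/connectP => p; elim: p a => [|y p IH] a /=; first by move=> _ -> ->.
case/andP => eay pp lx aS xS.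
case yS: (y \in S); first exact: IH pp lx yS xS.
by exists a, y; rewrite yS.
Qed.

Lemma size_uniq_card (l : seq T) : uniq l -> size l <= #|T|.
Proof. by move/card_uniqP <-; apply: max_card. Qed.

Lemma build (conn : forall x y, connect e x y) l0 : l0 != [::] -> uniq l0 -> okb [::] l0 ->
  exists l, [/\ uniq (l0 ++ l), okb [::] (l0 ++ l) & forall x, x \in l0 ++ l].
Proof.
move=> ne u0 ok0.
suff: forall k l0, #|T| - size l0 <= k -> l0 != [::] -> uniq l0 -> okb [::] l0 ->
  exists l, [/\ uniq (l0 ++ l), okb [::] (l0 ++ l) & forall x, x \in l0 ++ l].
  by move=> H; exact: (H _ l0 (leqnn _)).
elim=> [|k IH] {}l0 {ne u0 ok0} hk ne u0 ok0;
  (case: (pickP (fun x => x \notin l0)) => [x hx | hall];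
   [| by exists [::]; rewrite !cats0; split => // x; move: (hall x) => /= /negbFE]).
- have := size_uniq_card (l := x :: l0); rewrite /= hx u0 /= => /(_ isT) h; move: hk; rewrite leqn0 subn_eq0 => hk; by rewrite ltnNge hk in h.
case: l0 hk ne u0 ok0 hx => [//|a l0'] hk _ u0 ok0 hx.
have [u [w [uS wS euw]]] := leave (conn a x) (mem_head a l0') hx.
have u1 : uniq (rcons (a :: l0') w) by rewrite rcons_uniq wS u0.
have ok1 : okb [::] (rcons (a :: l0') w).
  by rewrite okb_rcons ok0 cat0s; apply/orP; right; apply/hasP; exists u => //; rewrite esym.
have sz := size_uniq_card u1; rewrite size_rcons in sz.
have [l [ul okl cl]] := IH (rcons (a :: l0') w) ltac:(rewrite size_rcons; lia)
  ltac:(by case: (a :: l0') ) u1 ok1.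
by exists (w :: l); rewrite -cat_rcons.
Qed.

Fixpoint costL (l : seq T) : nat := if l is v :: l' then count (e v) l' + costL l' else 0.

Definition D (b : T -> nat) (W : seq (T * T)) (v : T) := b v + 2 * degc W v.

Lemma D_add b W u w j x : e u w ->
  D b (nseq j (u, w) ++ W) x = D b W x + 2 * (j * ((x == u) + (x == w))).
Proof. by move=> euw; rewrite /D degc_cat degc_nseq degc1 //; lia. Qed.

Lemma D_odd b W x : odd (D b W x) = odd (b x).
Proof. by rewrite /D oddD oddM /= addbF. Qed.

Lemma count_le_seq (F : seq nat) a N :
  count (fun j => a + 2 * j \in F) (iota 0 N) <= size F.
Proof.
rewrite -size_filter -(size_map (fun j => a + 2 * j)); apply: uniq_leq_size.
  rewrite map_inj_uniq ?filter_uniq ?iota_uniq // => x y h; lia.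
by move=> y /mapP [j]; rewrite mem_filter => /andP [h _] ->.
Qed.

Lemma pigeon2 (F1 F2 : seq nat) a1 a2 : exists j,
  [/\ j <= size F1 + size F2, a1 + 2 * j \notin F1 & a2 + 2 * j \notin F2].
Proof.
set N := size F1 + size F2.
have : has (fun j => (a1 + 2 * j \notin F1) && (a2 + 2 * j \notin F2)) (iota 0 N.+1).
  apply/negPn/negP => /hasPn H.
  have c1 := count_le_seq F1 a1 N.+1; have c2 := count_le_seq F2 a2 N.+1.
  have c3 := count_predUI (fun j => a1 + 2 * j \in F1) (fun j => a2 + 2 * j \in F2) (iota 0 N.+1).
  have : count (predU (fun j => a1 + 2 * j \in F1) (fun j => a2 + 2 * j \in F2)) (iota 0 N.+1) = N.+1.
    rewrite -{2}(size_iota 0 N.+1) -count_predT; apply: eq_in_count => j hj.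
    by move: (H j hj); rewrite /= negb_and !negbK.
  rewrite /N in c1 c2 c3 *; lia.
case/hasP => j; rewrite mem_iota => /andP [_ hj] /andP [h1 h2].
by exists j; split => //; rewrite /N -ltnS; move: hj; rewrite add0n.
Qed.

Lemma greedy (b : T -> nat) r c p l : uniq (r :: c :: p ++ l) -> okb [::] (r :: c :: p ++ l) ->
  exists W, [/\ all (fun q => e q.1 q.2) W, size W <= costL l &
    forall x y, x \in l -> y \in l -> e x y -> D b W x != D b W y].
Proof.
elim: l p => [|v l IH] p.
  by move=> _ _; exists [::]; split.
move=> un ok.
have [W [aW sW dW]] : exists W, [/\ all (fun q => e q.1 q.2) W, size W <= costL l &
    forall x y, x \in l -> y \in l -> e x y -> D b W x != D b W y].
  by apply: (IH (rcons p v)); rewrite -cat_rcons in un ok.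
have : okb (r :: c :: p) (v :: l) by move: ok; rewrite -[r :: c :: p ++ v :: l]/((r :: c :: p) ++ v :: l) okb_cat => /andP [].
move=> /andP [H _]; have /hasP [u hu evu] : has (e v) (r :: c :: p) by exact: H.
have euv : e u v by rewrite esym.
move: un; rewrite -[r :: c :: p ++ v :: l]/((r :: c :: p) ++ v :: l) cat_uniq => /and3P [_ hdis /andP [vl ul]].
have unl : forall y, y \in v :: l -> y != u.
  move=> y hy; apply: contraNneq hdis => eyu; apply/hasP; exists y => //; rewrite eyu.
  exact: hu.
have [j [hj h1 _]] := pigeon2 [seq D b W y | y <- l & e v y] [::] (D b W v) 0.
exists (nseq j (u, v) ++ W); split.
- by rewrite all_cat aW andbT all_nseq /= euv orbT.
- rewrite size_cat size_nseq /= addn0 size_map size_filter in hj *; exact: leq_add.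
have Dl : forall y, y \in l -> D b (nseq j (u, v) ++ W) y = D b W y.
  move=> y hy; rewrite D_add //.
  rewrite (negbTE (unl y (mem_behead (s := v :: l) hy))).
  have -> : (y == v) = false by apply/negbTE; apply: contraNneq vl => <-.
  by rewrite /= muln0 muln0 addn0.
have Dv : D b (nseq j (u, v) ++ W) v = D b W v + 2 * j.
  by rewrite D_add // (negbTE (unl v (mem_head _ _))) eqxx muln1.
have key : forall y, y \in l -> e v y -> D b (nseq j (u, v) ++ W) v != D b (nseq j (u, v) ++ W) y.
  move=> y hy evy; rewrite Dv Dl //; apply: contraNneq h1 => ->.
  by apply: map_f; rewrite mem_filter evy.
move=> x y; rewrite !inE => /orP [/eqP ->|hx] /orP [/eqP ->|hy] exy.
- by rewrite eirr in exy.
- exact: key.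
- by rewrite eq_sym; apply: key; rewrite // esym.
- by rewrite !Dl //; apply: dW.
Qed.

Lemma greedy_final (b : T -> nat) r c rest : uniq (r :: c :: rest) -> okb [::] (r :: c :: rest) ->
  (forall x, x \in r :: c :: rest) -> odd (b r) != odd (b c) ->
  exists W, [/\ all (fun q => e q.1 q.2) W, size W <= (costL (r :: c :: rest)).-1 &
    forall x y, e x y -> D b W x != D b W y].
Proof.
move=> un ok cov par.
have [W [aW sW dW]] := greedy b (p := [::]) un ok.
have : okb [::] [:: r; c] by move: ok; rewrite -[r :: c :: rest]/([:: r; c] ++ rest) okb_cat => /andP [].
rewrite /= orbF andbT => ecr.
have erc : e r c by rewrite esym.
move: un => /= /andP [hr /andP [hc ur]].
have [j [hj h1 h2]] := pigeon2 [seq D b W y | y <- rest & e c y]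
   [seq D b W y | y <- rest & e r y] (D b W c) (D b W r).
set W' := nseq j (r, c) ++ W.
exists W'; split.
- by rewrite all_cat aW andbT all_nseq /= erc orbT.
- rewrite /W' size_cat size_nseq !size_map !size_filter in hj *.
  rewrite /= erc /=; move: hj sW; rewrite /=; set a := count _ rest; set a' := count _ rest.
  move=> hj sW; apply: (@leq_trans (a + a' + costL rest)); first exact: leq_add.
  by rewrite /a /a'; lia.
have nr : forall y, y \in rest -> (y == r) = false.
  by move=> y hy; apply/negbTE; apply: contraNneq hr => <-; rewrite inE hy orbT.
have nc : forall y, y \in rest -> (y == c) = false.
  by move=> y hy; apply/negbTE; apply: contraNneq hc => <-.
have nrc : (c == r) = false by apply/negbTE; apply: contraNneq hr => ->; rewrite inE eqxx.
have Dl : forall y, y \in rest -> D b W' y = D b W y.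
  by move=> y hy; rewrite /W' D_add // nr // nc // /= !muln0 addn0.
have Dr : D b W' r = D b W r + 2 * j by rewrite /W' D_add // eqxx eq_sym nrc /= muln1.
have Dc : D b W' c = D b W c + 2 * j by rewrite /W' D_add // eqxx nrc /= muln1.
have Kr : forall y, y \in rest -> e r y -> D b W' r != D b W' y.
  move=> y hy ery; rewrite Dr Dl //; apply: contraNneq h2 => ->.
  by apply: map_f; rewrite mem_filter ery.
have Kc : forall y, y \in rest -> e c y -> D b W' c != D b W' y.
  move=> y hy ecy; rewrite Dc Dl //; apply: contraNneq h1 => ->.
  by apply: map_f; rewrite mem_filter ecy.
have Krc : D b W' r != D b W' c.
  by apply: contra par => /eqP h; rewrite -(D_odd b W' r) h D_odd.
move=> x y; move: (cov x) (cov y); rewrite !inE.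
case/or3P => [/eqP ->|/eqP ->|hx]; case/or3P => [/eqP ->|/eqP ->|hy] exy.
- by rewrite eirr in exy.
- exact: Krc.
- exact: Kr.
- by rewrite eq_sym.
- by rewrite eirr in exy.
- exact: Kc.
- by rewrite eq_sym; apply: Kr; rewrite // esym.
- by rewrite eq_sym; apply: Kc; rewrite // esym.
- by rewrite !Dl //; apply: dW.
Qed.

Lemma costL_rcons l w : costL (rcons l w) = costL l + count (e w) l.
Proof.
elim: l => [|a l IH] //=.
rewrite IH -cats1 count_cat /= esym; lia.
Qed.

Lemma costL_ge l : okb [::] l -> (size l).-1 <= costL l.
Proof.
elim/last_ind: l => [|l w IH] //.
rewrite okb_rcons cat0s costL_rcons size_rcons /= => /andP [ok /orP [/eqP -> //|]].
rewrite has_count => h; have := IH ok; case: l {IH ok} h => //= a l h; lia.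
Qed.

Lemma card_filter_uniq (l : seq T) v : uniq l -> #|[set y in l | e v y]| = count (e v) l.
Proof.
move=> ul; rewrite -size_filter; have /card_uniqP <- := filter_uniq (e v) ul.
by apply: eq_card => y; rewrite inE mem_filter andbC.
Qed.

Lemma costL_le l : uniq l -> costL l <= #|[set E in edge_set e | E \subset [set x in l]]|.
Proof.
elim: l => [|v l IH] /=; first by [].
case/andP => vl ul.
set A := [set E in edge_set e | E \subset [set x in l]].
set B := [set [set v; y] | y in [set y in l | e v y]].
have cB : #|B| = count (e v) l.
  rewrite card_in_imset ?card_filter_uniq // => y1 y2; rewrite !inE => /andP [h1 _] /andP [h2 _] E.
  have : y1 \in [set v; y2] by rewrite -E !inE eqxx orbT.
  rewrite !inE => /orP [/eqP ey|/eqP //]; by rewrite -ey h1 in vl.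
have dAB : A :&: B = set0.
  apply/setP => E; rewrite !inE; apply/negP => /andP [/andP [_ sE] /imsetP [y _ EE]].
  have : v \in [set x in l] by apply: (subsetP sE); rewrite EE !inE eqxx.
  by rewrite inE (negbTE vl).
have := cardsUI A B; rewrite dAB cards0 addn0 => cU.
apply: (@leq_trans #|A :|: B|); first by rewrite cU cB [#|A| + _]addnC leq_add2l IH.
apply: subset_leq_card; apply/subsetP => E; rewrite !inE => /orP [/andP [hE sE]|].
  rewrite hE /=; apply/subsetP => x hx; move: (subsetP sE x hx); rewrite !inE => ->.
  by rewrite orbT.
case/imsetP => y; rewrite inE => /andP [yl evy] ->.
apply/andP; split.
  by apply/existsP; exists v; apply/existsP; exists y; rewrite evy eqxx.
by apply/subsetP => x; rewrite !inE => /orP [->|/eqP ->] //; rewrite yl orbT.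
Qed.

End Walks.

Section Walks2.
Variable T : finType.
Variable e : rel T.
Hypothesis esym : symmetric e.
Hypothesis eirr : irreflexive e.

Lemma degc_lin L1 L2 L3 a a' : (forall x y, cnt L1 x y = a * cnt L2 x y + a' * cnt L3 x y) ->
  forall v, degc e L1 v = a * degc e L2 v + a' * degc e L3 v.
Proof.
move=> H v; rewrite /degc !big_distrr -big_split; apply: eq_bigr => y _; exact: H.
Qed.

Lemma deg_plusE u0 s v : deg_plus e u0 s v = dg e v + degc e (pairs (u0 :: s)) v.
Proof. by rewrite /deg_plus big_split. Qed.

Lemma par_lemma (t : bool) a b x y : t = (odd b == odd a) ->
  odd (a + 2 * x + (if t then 1 else 0)) != odd (b + 2 * y).
Proof.
move=> ht; rewrite !oddD /=.
by case: t ht => /=; case: (odd a); case: (odd b); case: (odd x); case: (odd y).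
Qed.

Lemma core r c z rest : uniq (r :: c :: z :: rest) -> okb e [::] (r :: c :: z :: rest) ->
  (forall x, x \in r :: c :: z :: rest) -> e r z ->
  exists s, [/\ path e r s, irregularising e r s &
    size s <= 2 * (size rest).+2 + 2 * (costL e (r :: c :: z :: rest)).-1 + 1].
Proof.
move=> un ok cov erz.
have [s0 [LT [ps0 ls0 sz0 sub0 c0]]] := spanning esym ok.
have [t ht] : {t | t = (odd (dg e c) == odd (dg e r))} by exists (odd (dg e c) == odd (dg e r)).
have [b hb] : {b : T -> nat | forall v, b v = dg e v + 2 * degc e LT v + (if t then (v == r) + (v == z) else 0)}.
  by exists (fun v => dg e v + 2 * degc e LT v + (if t then (v == r) + (v == z) else 0)).
have hrz : (r == z) = false.
  by apply/negbTE; move: un => /= /andP [+ _]; apply: contraNneq => ->; rewrite !inE eqxx orbT.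
have hcr : (c == r) = false.
  by apply/negbTE; move: un => /= /andP [+ _]; apply: contraNneq => ->; rewrite !inE eqxx.
have hcz : (c == z) = false.
  by apply/negbTE; move: un => /= /andP [_ /andP [+ _]]; apply: contraNneq => ->; rewrite !inE eqxx.
have par : odd (b r) != odd (b c).
  rewrite !hb eqxx hrz hcr hcz.
  have -> : (if t then true + false else 0) = (if t then 1 else 0) by case: t {ht hb}.
  have -> : (if t then false + false else 0) = 0 by case: t {ht hb}.
  by rewrite addn0; apply: par_lemma.
have [W [aW sW dW]] := greedy_final esym eirr un ok cov par.
have [s1 [ps1 ls1 sz1 c1 sub1]] := realize esym ps0 ls0 aW (fun q _ => sub0 _ (cov q.1)).
have deg1 : forall v, degc e (pairs (r :: s1)) v = 2 * degc e LT v + 2 * degc e W v.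
  by apply: degc_lin => x y; rewrite c1 c0.
exists (if t then rcons s1 z else s1); split.
- by case: t {ht hb}; rewrite // rcons_path ps1 ls1.
- move=> x y exy; have := dW x y exy; apply: contra => /eqP h; apply/eqP; move: h.
  rewrite !deg_plusE /D !hb.
  case: t {ht hb}.
    rewrite -rcons_cons pairs_rcons ls1.
    have dd : forall v, degc e (rcons (pairs (r :: s1)) (r, z)) v =
        2 * degc e LT v + 2 * degc e W v + ((v == r) + (v == z)).
      by move=> v; rewrite -cats1 degc_cat deg1 (degc1 esym eirr).
    rewrite !dd; clear; lia.
  rewrite !deg1 /=; clear; lia.
- move: (costL e [:: r, c, z & rest]).-1 sW => K sW.
  case: t {ht hb}; rewrite ?size_rcons sz1 sz0 /=; clear -sW; lia.
Qed.

End Walks2.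


Lemma size_cover (T : finType) (l : seq T) : uniq l -> (forall x, x \in l) -> size l = #|T|.
Proof.
move=> ul cov; apply/eqP; rewrite eqn_leq size_uniq_card //=.
move/card_uniqP: ul => <-; apply: subset_leq_card; apply/subsetP => x _; exact: cov x.
Qed.

Lemma edges_le (T : finType) (e : rel T) (l : seq T) :
  #|[set E in edge_set e | E \subset [set x in l]]| <= gsize e.
Proof. by apply: subset_leq_card; apply/subsetP => E; rewrite inE => /andP []. Qed.

Unset Implicit Arguments.

Theorem corollary4p2 (T : finType) (e : rel T) :
  simple_graph e -> nice e ->
  MLW_le e (2 * (gsize e + #|T| - 1)) /\ MLW_le e (4 * gsize e).
Proof.
move=> [esym eirr] [[T0 conn] nK2].
have /card_gt0P [x0 _] := T0.
have [l [ul okl covl]] := build esym conn (l0 := [:: x0]) isT isT isT.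
have szo := size_cover ul covl.
case: l ul okl covl szo => [|x1 [|x2 rest0]] ul okl covl szo.
- split; exists x0, [::]; split => //; (split => // x y exy; exfalso;
    move: (covl x) (covl y); rewrite !inE => /eqP ex /eqP ey;
    by rewrite ex ey eirr in exy).
- exfalso; apply: nK2.
  have e10 : e x1 x0 by move: okl; rewrite /= orbF andbT.
  have n10 : (x1 == x0) = false by apply/negbTE; apply: contraTneq e10 => ->; rewrite eirr.
  exists (fun x => x == x0); split.
    exists (fun b : bool => if b then x0 else x1).
      move=> x; move: (covl x); rewrite !inE => /orP [/eqP ->|/eqP ->].
        by rewrite eqxx.
      by rewrite n10.
    by case => /=; rewrite ?eqxx ?n10.
  move=> x y; move: (covl x) (covl y); rewrite !inE.
  case/orP => [/eqP ->|/eqP ->]; case/orP => [/eqP ->|/eqP ->];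
    rewrite ?eqxx ?n10 ?eirr //= esym //.
have H : okb e [::] ([:: x0; x1; x2] ++ rest0) by exact: okl.
rewrite okb_cat /= !orbF andbT in H.
have /andP [/andP [e10 e2] _] := H.
move: ul => /= /andP [u0 /andP [u1 u2]].
have [r [c [H1 H2 H3]]] : exists r c, [/\ uniq [:: r; c; x2], okb e [::] [:: r; c; x2] & e r x2].
  move: u0 u1; rewrite !inE !negb_or => /andP [n01 /andP [n02 _]] /andP [n12 _].
  case e20 : (e x2 x0).
    exists x0, x1; split => //=; first by rewrite !inE !negb_or n01 n02 n12.
    by rewrite e10 e20.
    by rewrite esym.
  rewrite e20 /= in e2.
  exists x1, x0; split => //=; first by rewrite !inE !negb_or eq_sym n01 n12 n02.
    by rewrite esym e10 e2.
  by rewrite esym.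
have [rest [ur okr covr]] := build esym conn (l0 := [:: r; c; x2]) isT H1 H2.
have [s [ps irr hs]] := core esym eirr ur okr covr H3.
have szr := size_cover ur covr.
have k1 := costL_le e ur.
have k2 := edges_le e [:: r, c, x2 & rest].
have k3 := costL_ge esym okr.
rewrite -szr.
move: hs k1 k2 k3; rewrite !cat_cons cat0s.
move: (costL e [:: r, c, x2 & rest]) => k.
move: (#|[set E in edge_set e | E \subset [set x in [:: r, c, x2 & rest]]]|) => m1.
move: (gsize e) => m; rewrite /= => hs k1 k2 k3.
split; exists r, s; split => //; split => //; clear -hs k1 k2 k3; lia.
Qed.
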